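(* Let $n=p^k$, where $p$ is a prime and $k\ge2$, and let $G=\langle p^{k-1}+1\rangle$ be the subgroup of $\mathbb{Z}_n^\times$ generated by $p^{k-1}+1$. Then the coset index function $f_G$ is a $(p^k,\ 2p^{k-1}-p^{k-2},\ \{0,p^k-p^{k-1}\})$ zero-difference function.
   Context: For a subgroup $G$ of $\mathbb{Z}_n^\times$ and $r\in\mathbb{Z}_n$, the coset $rG=\{rg\mid g\in G\}$; these cosets partition $\mathbb{Z}_n$, forming a set $D_G$. The coset index function induced by $G$ is $f_G:\mathbb{Z}_n\to\mathbb{Z}_{|D_G|}$, $f_G(x)=h_G(C_x)$, where $C_x$ is the coset containing $x$ and $h_G:D_G\to\mathbb{Z}_{|D_G|}$ is a fixed bijection. A function $f:A\to B$ between finite abelian groups is an $(n,m,S)$ zero-difference function if $n=|A|$, $m=|f(A)|$, and for every nonzero $a\in A$, $|\{x\in A\mid f(x+a)=f(x)\}|\in S$. Here $A=(\mathbb{Z}_n,+)$. *)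

(* Defs.v *)
From HB Require Import structures.
From mathcomp Require Import all_boot all_order all_algebra all_fingroup.
Set Implicit Arguments. Unset Strict Implicit. Unset Printing Implicit Defensive.
Import GRing.Theory.
Local Open Scope ring_scope.

Definition Zcoset (n : nat) (G : {set {unit 'Z_n}}) (r : 'Z_n) : {set 'Z_n} :=
  [set r * val g | g in G].

Definition Zcosets (n : nat) (G : {set {unit 'Z_n}}) : {set {set 'Z_n}} :=
  [set Zcoset G r | r : 'Z_n].

Definition coset_index_fun (n : nat) (G : {set {unit 'Z_n}})
    (h : {set 'Z_n} -> 'I_#|Zcosets G|) (x : 'Z_n) : 'I_#|Zcosets G| :=
  h (Zcoset G x).

(* f : A -> B is an (n, m, S) zero-difference function. Only equality in B is
   used by the definition, so B is any finite type. *)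
Definition zero_difference (A : finZmodType) (B : finType) (f : A -> B)
    (n m : nat) (S : seq nat) : Prop :=
  [/\ #|A| = n, #|f @: [set: A]| = m &
      forall a : A, a != 0 -> #|[set x : A | f (x + a) == f x]| \in S].

(* Main.v *)
Require Import Defs.
From HB Require Import structures.
From mathcomp Require Import all_boot all_order all_algebra all_fingroup.
From mathcomp Require Import zify.
Import GRing.Theory.

Set Implicit Arguments. Unset Strict Implicit. Unset Printing Implicit Defensive.

Lemma sum_nat_count (T : Type) (s : seq T) (P : pred T) :
  (\sum_(i <- s) (P i : nat) = count P s)%N.
Proof. by elim: s => [|x s IH]; rewrite ?big_nil ?big_cons // IH. Qed.

Lemma card_Zp_pred (N : nat) (P : pred nat) : (1 < N)%N ->
  #|[set x : 'Z_N | P (val x)]| = count P (iota 0 N).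
Proof.
move=> N1; rewrite -sum1_card.
rewrite (eq_bigl (fun x : 'Z_N => P (val x))); last by move=> x; rewrite inE.
rewrite -[in RHS](Zp_cast N1) -sum1_count.
rewrite -(big_mkord P (fun _ => 1%N)).
by rewrite /index_iota subn0.
Qed.

Lemma totient_count (p j : nat) : prime p -> (0 < j)%N ->
  totient (p ^ j) = count (fun i => ~~ (p %| i)) (iota 0 (p ^ j)).
Proof.
move=> pp j0; rewrite totient_count_coprime /index_iota subn0 sum_nat_count.
by apply: eq_count => i; rewrite coprime_pexpl // prime_coprime.
Qed.

Lemma count_dvd (p j : nat) : prime p -> (0 < j)%N ->
  count (fun i => p %| i) (iota 0 (p ^ j)) + totient (p ^ j) = p ^ j.
Proof.
move=> pp j0; rewrite totient_count //.
have := count_predC (fun i => p %| i) (iota 0 (p ^ j)).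
by rewrite size_iota.
Qed.

Section Main.
Variables (p k : nat) (u : {unit 'Z_(p ^ k)}).
Hypotheses (pp : prime p) (k2 : (2 <= k)%N)
  (hu : val u = (((p ^ (k - 1)).+1)%:R)%R).

Local Notation N := (p ^ k).
Local Notation q := (p ^ (k - 1)).

Lemma p_gt1 : (1 < p)%N. Proof. exact: prime_gt1. Qed.
Lemma NE : N = p * q.
Proof. by rewrite -expnS subn1 prednK // (leq_trans _ k2). Qed.
Lemma N_gt1 : (1 < N)%N.
Proof. rewrite NE; have := p_gt1; have : (0 < q)%N by rewrite expn_gt0 prime_gt0. nia. Qed.
Lemma q_dvd_N : (q %| N)%N. Proof. by rewrite NE dvdn_mull. Qed.
Lemma N_dvd_qq : (N %| q * q)%N.
Proof. rewrite -expnD dvdn_exp2l //; lia. Qed.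
Lemma q_le_N : (q <= N)%N.
Proof. rewrite NE leq_pmull // prime_gt0 //. Qed.

Lemma valZ (x : 'Z_N) : (val x < N)%N.
Proof. have := ltn_ord x; move: (Zp_cast N_gt1) => e; rewrite [in X in (_ < X)%N -> _]e; done. Qed.

Lemma valM (x y : 'Z_N) : val (x * y)%R = (val x * val y) %% N.
Proof. by rewrite /= [in X in _ %% X = _]Zp_cast // N_gt1. Qed.

Lemma valD (x y : 'Z_N) : val (x + y)%R = (val x + val y) %% N.
Proof. by rewrite /= [in X in _ %% X = _]Zp_cast // N_gt1. Qed.

Lemma powmod i : (q.+1 ^ i = 1 + i * q %[mod N])%N.
Proof.
elim: i => [|i IH]; first by rewrite expn0 mul0n addn0.
rewrite expnS -modnMmr IH modnMmr.
case/dvdnP: N_dvd_qq => r hr.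
have -> : q.+1 * (1 + i * q) = (1 + i.+1 * q) + (i * r) * N.
  rewrite -mulnA -hr. nia.
by rewrite addnC modnMDl.
Qed.

Definition E (x y : 'Z_N) : bool :=
  (val y == val x) || (~~ (p %| val x) && (val y == val x %[mod q])).

Lemma mem_cosetP (x y : 'Z_N) :
  reflect (exists i, val y = (val x * (1 + i * q)) %% N) (y \in Zcoset <[u]>%g x).
Proof.
have key i : val (x * val (u ^+ i)%g)%R = (val x * (1 + i * q)) %% N.
  rewrite valM FinRing.val_unitX hu -natrX.
  rewrite (_ : \val ((q.+1 ^ i)%:R : 'Z_N)%R = q.+1 ^ i %% N); last exact: (val_Zp_nat N_gt1).
  by rewrite modnMmr -modnMmr powmod modnMmr.
apply: (iffP imsetP).
  by case=> g /cycleP [i ->] ->; exists i; rewrite key.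
case=> i hi; exists (u ^+ i)%g; first exact: mem_cycle.
by apply: val_inj; rewrite key.
Qed.

Lemma memE (x y : 'Z_N) : (y \in Zcoset <[u]>%g x) = E x y.
Proof.
apply/mem_cosetP/idP.
  case=> i hi; rewrite /E.
  have [px|npx] := boolP (p %| val x).
    case/dvdnP: px => a ha.
    have e : val x * (1 + i * q) = val x + (a * i) * N.
      by move: (val x) ha => X ->; rewrite NE; nia.
    by apply/orP; left; apply/eqP; rewrite hi e addnC modnMDl modn_small ?valZ.
  apply/orP; right; apply/andP; split=> //; rewrite hi modn_dvdm ?q_dvd_N //.
  by rewrite mulnDr muln1 mulnA addnC modnMDl.
case/orP.
  move/eqP=> ->; exists 0; by rewrite mul0n addn0 muln1 modn_small ?valZ.
case/andP => npx hm.
have x0 : (0 < val x)%N.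
  by rewrite lt0n; apply: contra npx => /eqP ->; rewrite dvdn0.
case: (egcdnP p x0) => c t hc _.
have g1 : gcdn (val x) p = 1.
  by apply/eqP; have : coprime (val x) p by rewrite coprime_sym prime_coprime.
rewrite g1 in hc.
set xq := val x %/ q; set yq := val y %/ q; set r := val x %% q.
have hx : val x = xq * q + r by rewrite /xq /r -divn_eq.
have hy : val y = yq * q + r by rewrite /yq /r -(eqP hm) -divn_eq.
have [p' hp'] : exists p', p = p'.+1 by exists p.-1; rewrite prednK // prime_gt0.
exists (c * (yq + p' * xq)).
set s := yq + p' * xq.
have e : forall X Y, X = xq * q + r -> Y = yq * q + r -> c * X = t * p + 1 ->
    X * (1 + c * s * q) = Y + (t * s + xq) * (p * q).
  move=> X Y hX hY h.
  have -> : X * (1 + c * s * q) = X + c * X * s * q by nia.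
  rewrite h hX hY /s hp'; nia.
rewrite (e _ _ hx hy hc) -NE.
by rewrite addnC modnMDl modn_small ?valZ.
Qed.

Lemma dvd_p_mod (x y : nat) : (y == x %[mod q]) -> (p %| y) = (p %| x).
Proof.
move=> h.
have pq : (p %| q)%N by apply: dvdn_exp => //; lia.
by rewrite /dvdn -(modn_dvdm y pq) (eqP h) modn_dvdm.
Qed.

Lemma E_refl x : E x x. Proof. by rewrite /E eqxx. Qed.

Lemma coset_eq (x y : 'Z_N) : (Zcoset <[u]>%g x == Zcoset <[u]>%g y) = E x y.
Proof.
apply/eqP/idP.
  by move=> hxy; rewrite -memE hxy memE E_refl.
move=> hE; apply/setP => z; rewrite !memE.
case/orP: hE => [/eqP/val_inj -> //|/andP [npx hm]].
have npy : ~~ (p %| val y) by rewrite (dvd_p_mod hm).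
rewrite /E (negbTE npx) (negbTE npy) /=.
have eq1 (a : 'Z_N) : ~~ (p %| val a) -> ((val z == val a) || (val z == val a %[mod q])) = (val z == val a %[mod q]).
  by move=> _; case: (eqVneq (val z) (val a)) => [->|_]; rewrite ?eqxx.
rewrite !eq1 //.
by rewrite /= (eqP hm).
Qed.


Definition rep (x : 'Z_N) : 'Z_N :=
  if p %| val x then x else (((val x %% q)%:R : 'Z_N)%R).

Lemma q_gt0 : (0 < q)%N. Proof. by rewrite expn_gt0 prime_gt0. Qed.

Lemma rep_val (x : 'Z_N) : ~~ (p %| val x) -> val (rep x) = val x %% q.
Proof.
move=> npx; rewrite /rep (negbTE npx).
rewrite (_ : \val (((val x %% q)%:R : 'Z_N))%R = (val x %% q) %% N); last exact: (val_Zp_nat N_gt1).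
by rewrite modn_small // (leq_trans _ q_le_N) // ltn_mod q_gt0.
Qed.

Definition Rset := [set x : 'Z_N | (p %| val x) || (val x < q)%N].

Lemma rep_in x : rep x \in Rset.
Proof.
rewrite inE; have [px|npx] := boolP (p %| val x).
  by rewrite /rep px px.
by rewrite rep_val // ltn_mod q_gt0 orbT.
Qed.

Lemma rep_E x : E x (rep x).
Proof.
rewrite /E; have [px|npx] := boolP (p %| val x).
  by rewrite /rep px eqxx.
by rewrite rep_val // modn_mod eqxx orbT.
Qed.

Lemma cosets_card : #|Zcosets <[u]>%g| = (2 * q - p ^ (k - 2))%N.
Proof.
have -> : Zcosets <[u]>%g = Zcoset <[u]>%g @: Rset.
  apply/setP => C; apply/imsetP/imsetP => [[x _ ->]|[x _ ->]]; last by exists x.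
  by exists (rep x); [exact: rep_in | apply/eqP; rewrite coset_eq rep_E].
rewrite card_in_imset; last first.
  move=> x y; rewrite !inE => hx hy /eqP; rewrite coset_eq /E.
  case/orP => [/eqP h|/andP [npx hm]]; first by apply: val_inj.
  have npy : ~~ (p %| val y) by rewrite (dvd_p_mod hm).
  rewrite (negbTE npx) /= in hx; rewrite (negbTE npy) /= in hy.
  by apply: val_inj; rewrite /= -(modn_small hx) -(modn_small hy) (eqP hm).
rewrite /Rset (card_Zp_pred (fun i => (p %| i) || (i < q)%N) N_gt1).
have hN : N = q + (N - q) by rewrite subnKC // q_le_N.
have hI : iota 0 N = iota 0 q ++ iota q (N - q) by rewrite {1}hN iotaD.
rewrite hI count_cat.
have -> : count (fun i => (p %| i) || (i < q)%N) (iota 0 q) = q.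
  rewrite (eq_in_count (a2 := predT)) ?count_predT ?size_iota //.
  by move=> i; rewrite mem_iota add0n => /andP [_ ->]; rewrite orbT.
have -> : count (fun i => (p %| i) || (i < q)%N) (iota q (N - q)) =
          count (fun i => (p %| i)) (iota q (N - q)).
  apply: eq_in_count => i; rewrite mem_iota => /andP [hi _].
  by rewrite ltnNge hi orbF.
have k1 : (0 < k - 1)%N by lia.
have c1 := count_dvd pp k1.
have c2 := @count_dvd p k pp (ltnW k2).
rewrite hI count_cat in c2.
rewrite totient_pfactor // in c1; rewrite totient_pfactor // in c2.
have e1 : q = p * p ^ (k - 2) by rewrite -expnS; congr (p ^ _); lia.
have e2 : N = p * q by rewrite NE.
have e3 : p.-1 * p ^ (k - 1).-1 + p ^ (k - 2) = q.
  rewrite (_ : (k - 1).-1 = k - 2); last lia.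
  rewrite e1; have := prime_gt0 pp; nia.
have e4 : p.-1 * p ^ k.-1 + q = N.
  rewrite (_ : k.-1 = k - 1); last lia.
  rewrite e2; have := prime_gt0 pp; nia.
all: lia.
Qed.

End Main.

Theorem proposition3p8 (p k : nat) (u : {unit 'Z_(p ^ k)}) :
  prime p -> (2 <= k)%N ->
  val u = (((p ^ (k - 1)).+1)%:R)%R ->
  forall h : {set 'Z_(p ^ k)} -> 'I_#|Zcosets <[u]>%g|,
    {in Zcosets <[u]>%g &, injective h} ->
    h @: Zcosets <[u]>%g = [set: 'I_#|Zcosets <[u]>%g|] ->
    zero_difference (coset_index_fun h) (p ^ k)
      (2 * p ^ (k - 1) - p ^ (k - 2)) [:: 0%N; (p ^ k - p ^ (k - 1))%N].
Proof.
move=> pp k2 hu h hinj himg.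
have fE x y : (coset_index_fun h x == coset_index_fun h y) = E x y.
  rewrite /coset_index_fun -(coset_eq pp k2 hu); apply/eqP/eqP => [/hinj|->//].
  by apply; apply/imsetP; [exists x | exists y].
split.
- by rewrite card_ord Zp_cast // (N_gt1 pp k2).
- rewrite (_ : coset_index_fun h @: [set: 'Z_(p ^ k)] = h @: Zcosets <[u]>%g).
    by rewrite himg cardsT card_ord (cosets_card pp k2 hu).
  apply/setP => i; apply/imsetP/imsetP => [[x _ ->]|[C /imsetP [x _ ->] ->]].
    by exists (Zcoset <[u]>%g x) => //; apply/imsetP; exists x.
  by exists x; rewrite ?inE.
move=> a a0.
pose b := (p ^ (k - 1) %| val a).
have key (x : 'Z_(p ^ k)) : (coset_index_fun h (x + a)%R == coset_index_fun h x) =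
    (~~ (p %| val x) && b).
  rewrite eq_sym fE /E.
  have -> : (val (x + a)%R == val x) = false.
    apply/negbTE; apply: contra a0 => /eqP/val_inj e.
    have e' : (x + a = x + 0)%R by rewrite addr0.
    by rewrite (addrI x e') eqxx.
  have hv : val (x + a)%R = (val x + val a) %% p ^ k by exact: (valD pp k2 x a).
  rewrite orFb. rewrite hv.
  rewrite modn_dvdm; last exact: (q_dvd_N p k2).
  by rewrite -{3}[val x]addn0 eqn_modDl mod0n /b.
suff H : #|[set x : 'Z_(p ^ k) | coset_index_fun h (x + a)%R == coset_index_fun h x]|
   \in [:: 0%N; (p ^ k - p ^ (k - 1))%N] by exact H.
rewrite (eq_card (B := [set x : 'Z_(p ^ k) | ~~ (p %| val x) && b])); last first.
  by move=> x; rewrite !inE key.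
have [qa|nqa] := boolP b.
  rewrite (eq_card (B := [set x : 'Z_(p ^ k) | ~~ (p %| val x)])); last first.
    by move=> x; rewrite !inE andbT.
  rewrite (card_Zp_pred (fun i => ~~ (p %| i)) (N_gt1 pp k2)).
  have k0 : (0 < k)%N by lia.
  have k1 : (0 < k - 1)%N by lia.
  rewrite -totient_count ?totient_pfactor //.
  rewrite (_ : k.-1 = k - 1); last lia.
  rewrite inE; apply/orP; right; rewrite inE; apply/eqP.
  rewrite (NE p k2); have := prime_gt0 pp; nia.
rewrite (_ : #|_| = 0%N) ?inE //.
by apply: eq_card0 => x; rewrite !inE andbF.
Qed.
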